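(* Let $(\mathcal{C},f,m)$ be a Floer triple over a field $\mathbb{F}$. Then both chain complexes $\varinjlim_{b\to\infty}\varprojlim_{a\to-\infty}CM_a^b$ and $\varprojlim_{a\to-\infty}\varinjlim_{b\to\infty}CM_a^b$ are naturally isomorphic to the Novikov complex $(\Lambda,\partial)$, the canonical chain map $k$ between them is an isomorphism (hence so is $Hk$), and $H(\varinjlim_b\varprojlim_a CM)\cong H(\varprojlim_a\varinjlim_b CM)\cong HM$.
   Context: A Floer triple $(\mathcal{C},f,m)$ over a field $\mathbb{F}$: a set $\mathcal{C}$, $f\colon\mathcal{C}\to\mathbb{R}$, $m\colon\mathcal{C}\times\mathcal{C}\to\mathbb{F}$ with (i) $\mathcal{C}_a^b=\{c: a\le f(c)\le b\}$ finite for all $a\le b$; (ii) $m(c_1,c_2)\ne0\Rightarrow f(c_1)<f(c_2)$; (iii) $\sum_{c_2}m(c_1,c_2)m(c_2,c_3)=0$ for all $c_1,c_3$. $CM_a^b$ is the $\mathbb{F}$-vector space with basis $\mathcal{C}_a^b$ (zero if $a>b$), $\partial_a^b c=\sum_{c'\in\mathcal{C}_a^b}m(c',c)c'$. For $a_1\le a_2$, $p^b_{a_2,a_1}\colon CM^b_{a_1}\to CM^b_{a_2}$ sends $c\mapsto c$ if $f(c)\ge a_2$, else $0$; for $b_1\le b_2$, $i_a^{b_2,b_1}$ is the inclusion. The inverse limit over $a$ is taken with respect to the $p$'s (compatible families), the direct limit over $b$ with respect to the $i$'s. The canonical map $k\colon\varinjlim_b\varprojlim_a CM\to\varprojlim_a\varinjlim_b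 CM$ sends the class of $(x_a)_a\in\varprojlim_a CM_a^b$ to $(i_a^b x_a)_a$, with $i_a^b\colon CM_a^b\to\varinjlim_{b'}CM_a^{b'}$ canonical. The Novikov complex $\Lambda$ consists of formal sums $\sum_{c\in\mathcal{C}}\gamma_c c$, $\gamma_c\in\mathbb{F}$, with $\{c:\gamma_c\neq0, f(c)>b\}$ finite for all $b$, and $\partial\sum\gamma_cc=\sum_c\gamma_c\sum_{c'}m(c',c)c'$; $HM=H(\Lambda,\partial)$. *)

(* Defs.v *)
From Stdlib Require Import Reals ClassicalEpsilon.
From HB Require Import structures.
From mathcomp Require Import all_boot all_order all_algebra.
Set Implicit Arguments. Unset Strict Implicit. Unset Printing Implicit Defensive.
Import GRing.Theory.
Local Open Scope ring_scope.

(* Sum over a set C of a family with finite support: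
   \sum_{c} g c  (the sum over any duplicate-free list containing the
   support; 0 by convention if the support is infinite, which never
   happens in the uses below).                                          *)
Definition fsum (V : nmodType) (C : eqType) (g : C -> V) : V :=
  match excluded_middle_informative
          (exists s : seq C, uniq s /\ forall c, g c != 0 -> c \in s) with
  | left H => \sum_(c <- proj1_sig (constructive_indefinite_description _ H)) g c
  | right _ => 0
  end.

Definition floer_triple (F : fieldType) (C : eqType) (f : C -> R)
    (m : C -> C -> F) : Prop :=
  (forall a b : R, exists s : seq C,
      forall c, (c \in s) <-> (Rle a (f c) /\ Rle (f c) b)) /\
  (forall c1 c2, m c1 c2 != 0 -> Rlt (f c1) (f c2)) /\
  (forall c1 c3, fsum (fun c2 => m c1 c2 * m c2 c3) = 0).

(* Chain complexes over F presented concretely as "subsetoids":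
   a carrier, a membership predicate, an equality (equivalence) on members,
   the vector space operations and the differential.                    *)
Record cx (F : Type) := CX {
  ccar : Type;
  cmem : ccar -> Prop;
  ceqv : ccar -> ccar -> Prop;
  czero : ccar;
  cadd : ccar -> ccar -> ccar;
  cscl : F -> ccar -> ccar;
  cdif : ccar -> ccar }.
Arguments ccar {F} c.
Arguments cmem {F} c _.
Arguments ceqv {F} c _ _.
Arguments czero {F} c.
Arguments cadd {F} c _ _.
Arguments cscl {F} c _ _.
Arguments cdif {F} c _.

Section Complexes.
Variable F : fieldType.

Definition chain_complex (X : cx F) : Prop :=
  (forall x, cmem X x -> ceqv X x x) /\
  (forall x y, ceqv X x y -> ceqv X y x) /\
  (forall x y z, ceqv X x y -> ceqv X y z -> ceqv X x z) /\
  cmem X (czero X) /\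
  (forall x y, cmem X x -> cmem X y -> cmem X (cadd X x y)) /\
  (forall k x, cmem X x -> cmem X (cscl X k x)) /\
  (forall x, cmem X x -> cmem X (cdif X x)) /\
  (forall x x' y y', cmem X x -> cmem X x' -> cmem X y -> cmem X y' ->
     ceqv X x x' -> ceqv X y y' -> ceqv X (cadd X x y) (cadd X x' y')) /\
  (forall k x x', cmem X x -> cmem X x' -> ceqv X x x' ->
     ceqv X (cscl X k x) (cscl X k x')) /\
  (forall x x', cmem X x -> cmem X x' -> ceqv X x x' ->
     ceqv X (cdif X x) (cdif X x')) /\
  (forall x y, cmem X x -> cmem X y ->
     ceqv X (cdif X (cadd X x y)) (cadd X (cdif X x) (cdif X y))) /\
  (forall k x, cmem X x -> ceqv X (cdif X (cscl X k x)) (cscl X k (cdif X x))) /\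
  (forall x, cmem X x -> ceqv X (cdif X (cdif X x)) (czero X)).

Definition chain_iso (X Y : cx F) (phi : ccar X -> ccar Y) : Prop :=
  (forall x, cmem X x -> cmem Y (phi x)) /\
  (forall x x', cmem X x -> cmem X x' -> ceqv X x x' -> ceqv Y (phi x) (phi x')) /\
  (forall x y, cmem X x -> cmem X y ->
     ceqv Y (phi (cadd X x y)) (cadd Y (phi x) (phi y))) /\
  (forall k x, cmem X x -> ceqv Y (phi (cscl X k x)) (cscl Y k (phi x))) /\
  (forall x, cmem X x -> ceqv Y (phi (cdif X x)) (cdif Y (phi x))) /\
  (forall x x', cmem X x -> cmem X x' -> ceqv Y (phi x) (phi x') -> ceqv X x x') /\
  (forall y, cmem Y y -> exists x, cmem X x /\ ceqv Y (phi x) y).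

Definition cycle (X : cx F) (x : ccar X) : Prop :=
  cmem X x /\ ceqv X (cdif X x) (czero X).

Definition homologous (X : cx F) (x y : ccar X) : Prop :=
  exists z, cmem X z /\ ceqv X (cadd X x (cscl X (-1) y)) (cdif X z).

Definition homology_iso (X Y : cx F) (phi : ccar X -> ccar Y) : Prop :=
  (forall x, cycle x -> cycle (phi x)) /\
  (forall x x', cycle x -> cycle x' -> homologous x x' ->
     homologous (phi x) (phi x')) /\
  (forall x y, cycle x -> cycle y ->
     homologous (phi (cadd X x y)) (cadd Y (phi x) (phi y))) /\
  (forall k x, cycle x -> homologous (phi (cscl X k x)) (cscl Y k (phi x))) /\
  (forall x x', cycle x -> cycle x' -> homologous (phi x) (phi x') ->
     homologous x x') /\
  (forall y, cycle y -> exists x, cycle x /\ homologous (phi x) y).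

Variables (C : eqType) (f : C -> R) (m : C -> C -> F).

(* An element of CM_a^b is represented by its coefficient function
   C -> F, supported in C_a^b. *)
Definition inCM (a b : R) (x : C -> F) : Prop :=
  forall c, x c != 0 -> Rle a (f c) /\ Rle (f c) b.

(* p^b_{a2,a1} : CM^b_{a1} -> CM^b_{a2}, c |-> c if f c >= a2, else 0 *)
Definition pmap (a2 : R) (x : C -> F) : C -> F :=
  fun c => if Rle_dec a2 (f c) then x c else 0.

(* \partial_a^b c = \sum_{c' in C_a^b} m(c',c) c', extended linearly *)
Definition dCM (a b : R) (x : C -> F) : C -> F :=
  fun c' => if Rle_dec a (f c') then
              (if Rle_dec (f c') b then fsum (fun c => x c * m c' c) else 0)
            else 0.

(* lim_{b ->} lim_{<- a} CM_a^b : an element is the class of a pair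
   (b, (x_a)_a) with (x_a)_a a compatible family in prod_a CM_a^b;
   the inclusions i are identities on coefficient functions, so
   (b1,x) ~ (b2,y) iff i x = i y in some CM^b with b >= b1, b2. *)
Definition DirInv : cx F := {|
  ccar := (R * (R -> C -> F))%type;
  cmem := fun bx => (forall a, inCM a bx.1 (bx.2 a)) /\
                   (forall a1 a2, Rle a1 a2 ->
                      forall c, bx.2 a2 c = pmap a2 (bx.2 a1) c);
  ceqv := fun bx by_ => exists b, Rle bx.1 b /\ Rle by_.1 b /\
                   forall a c, bx.2 a c = by_.2 a c;
  czero := (R0, fun _ _ => 0);
  cadd := fun bx by_ => (Rmax bx.1 by_.1, fun a c => bx.2 a c + by_.2 a c);
  cscl := fun k bx => (bx.1, fun a c => k * bx.2 a c);
  cdif := fun bx => (bx.1, fun a => dCM a bx.1 (bx.2 a)) |}.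

(* equality in lim_{b ->} CM_a^b (a fixed) of classes of pairs (b, x) *)
Definition eqvDir (bx by_ : R * (C -> F)) : Prop :=
  exists b, Rle bx.1 b /\ Rle by_.1 b /\ forall c, bx.2 c = by_.2 c.

(* lim_{<- a} lim_{b ->} CM_a^b : compatible families (z_a)_a, z_a in
   lim_{b->} CM_a^b, for the maps induced by the p's. *)
Definition InvDir : cx F := {|
  ccar := R -> (R * (C -> F));
  cmem := fun z => (forall a, inCM a (z a).1 (z a).2) /\
                  (forall a1 a2, Rle a1 a2 ->
                     eqvDir (z a2) ((z a1).1, pmap a2 (z a1).2));
  ceqv := fun z w => forall a, eqvDir (z a) (w a);
  czero := fun _ => (R0, fun _ => 0);
  cadd := fun z w a => (Rmax (z a).1 (w a).1, fun c => (z a).2 c + (w a).2 c);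
  cscl := fun k z a => ((z a).1, fun c => k * (z a).2 c);
  cdif := fun z a => ((z a).1, dCM a (z a).1 (z a).2) |}.

(* Novikov complex: formal sums sum gamma_c c with
   {c | gamma_c <> 0, f c > b} finite for all b. *)
Definition novikov (g : C -> F) : Prop :=
  forall b : R, exists s : seq C, forall c, g c != 0 -> Rlt b (f c) -> c \in s.

Definition Novikov : cx F := {|
  ccar := C -> F;
  cmem := novikov;
  ceqv := fun g h => forall c, g c = h c;
  czero := fun _ => 0;
  cadd := fun g h c => g c + h c;
  cscl := fun k g c => k * g c;
  cdif := fun g c' => fsum (fun c => g c * m c' c) |}.

(* The canonical map k : lim_b lim_a CM -> lim_a lim_b CM,
   [(x_a)_a] |-> (i_a^b x_a)_a. *)
Definition kmap (bx : ccar DirInv) : ccar InvDir := fun a => (bx.1, bx.2 a).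

(* Canonical maps to the Novikov complex: the coefficient of c is the
   coefficient of c in the component at level a = f c (equivalently at
   any level a <= f c). *)
Definition DirInv_to_Nov (bx : ccar DirInv) : ccar Novikov :=
  fun c => bx.2 (f c) c.

Definition InvDir_to_Nov (z : ccar InvDir) : ccar Novikov :=
  fun c => (z (f c)).2 c.

End Complexes.

(* Main.v *)
Require Import Defs.
From Stdlib Require Import Reals Lra ClassicalEpsilon FunctionalExtensionality.
From HB Require Import structures.
From mathcomp Require Import all_boot all_order all_algebra.
Set Implicit Arguments. Unset Strict Implicit. Unset Printing Implicit Defensive.
Import GRing.Theory.
Local Open Scope ring_scope.

Lemma sum_supp (V : nmodType) (C : eqType) (g : C -> V) (t : seq C) :
  \sum_(c <- t) g c = \sum_(c <- t | g c != 0) g c.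
Proof.
rewrite [RHS]big_mkcond; apply: eq_bigr => c _.
by case: (g c =P 0) => [->|].
Qed.

Lemma sum_uniq_supp (V : nmodType) (C : eqType) (g : C -> V) (t1 t2 : seq C) :
  uniq t1 -> uniq t2 -> (forall c, g c != 0 -> c \in t1) ->
  (forall c, g c != 0 -> c \in t2) ->
  \sum_(c <- t1) g c = \sum_(c <- t2) g c.
Proof.
move=> u1 u2 h1 h2; rewrite (sum_supp g t1) (sum_supp g t2) -big_filter -[RHS]big_filter.
apply: perm_big; apply: uniq_perm; rewrite ?filter_uniq // => c.
rewrite !mem_filter; case E: (g c != 0) => //=.
by rewrite (h1 _ E) (h2 _ E).
Qed.

Lemma fsumE (V : nmodType) (C : eqType) (g : C -> V) (s : seq C) :
  (forall c, g c != 0 -> c \in s) -> fsum g = \sum_(c <- undup s) g c.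
Proof.
move=> hs; rewrite /fsum; case: excluded_middle_informative => [H|H].
  case: (constructive_indefinite_description _ H) => t [ut ht] /=.
  apply: sum_uniq_supp => //; first exact: undup_uniq.
  by move=> c /hs; rewrite mem_undup.
exfalso; apply: H; exists (undup s); split; first exact: undup_uniq.
by move=> c /hs; rewrite mem_undup.
Qed.

Lemma eq_fsum (V : nmodType) (C : eqType) (g h : C -> V) :
  (forall c, g c = h c) -> fsum g = fsum h.
Proof. by move=> e; rewrite (functional_extensionality g h e). Qed.

Lemma fsum0 (V : nmodType) (C : eqType) (g : C -> V) :
  (forall c, g c = 0) -> fsum g = 0.
Proof.
move=> e; rewrite (@fsumE _ _ _ [::]) ?big_nil // => c; by rewrite e eqxx.
Qed.

Lemma fsumD (V : nmodType) (C : eqType) (g h : C -> V) (s1 s2 : seq C) :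
  (forall c, g c != 0 -> c \in s1) -> (forall c, h c != 0 -> c \in s2) ->
  fsum (fun c => g c + h c) = fsum g + fsum h.
Proof.
move=> h1 h2.
have H1 : forall c, g c != 0 -> c \in s1 ++ s2 by move=> c /h1; rewrite mem_cat => ->.
have H2 : forall c, h c != 0 -> c \in s1 ++ s2 by move=> c /h2; rewrite mem_cat orbC => ->.
rewrite (fsumE H1) (fsumE H2) (fsumE (s := s1 ++ s2)) ?big_split //.
move=> c; case: (g c =P 0) => [->|/eqP /H1 //]; rewrite add0r; exact: H2.
Qed.

Lemma fsumZ (F : fieldType) (C : eqType) (g : C -> F) k (s : seq C) :
  (forall c, g c != 0 -> c \in s) ->
  fsum (fun c => k * g c) = k * fsum g.
Proof.
move=> hs; rewrite (fsumE hs) (fsumE (s := s)) ?mulr_sumr //.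
by move=> c; rewrite mulf_eq0 negb_or => /andP[_ /hs].
Qed.

Section Floer.
Variables (F : fieldType) (C : eqType) (f : C -> R) (m : C -> C -> F).
Hypothesis Hfin : forall a b : R, exists s : seq C,
      forall c, (c \in s) <-> (Rle a (f c) /\ Rle (f c) b).
Hypothesis Hm : forall c1 c2, m c1 c2 != 0 -> Rlt (f c1) (f c2).
Hypothesis Hmm : forall c1 c3, fsum (fun c2 => m c1 c2 * m c2 c3) = 0.

Definition D (v : C -> F) : C -> F := fun c' => fsum (fun c => v c * m c' c).

Lemma nzM (x y : F) : x * y != 0 -> x != 0 /\ y != 0.
Proof. by rewrite mulf_eq0 negb_or => /andP. Qed.

Lemma supp_D v c : novikov f v -> exists s : seq C,
  forall c0, v c0 * m c c0 != 0 -> c0 \in s.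
Proof.
move=> nv; case: (nv (f c)) => s hs; exists s => c0 /nzM [h1 h2].
exact: hs h1 (Hm h2).
Qed.

Lemma D_add v w c : novikov f v -> novikov f w ->
  D (fun x => v x + w x) c = D v c + D w c.
Proof.
move=> nv nw; rewrite /D; have [s1 h1] := supp_D c nv; have [s2 h2] := supp_D c nw.
rewrite -(fsumD h1 h2); apply: eq_fsum => x; by rewrite mulrDl.
Qed.

Lemma D_scl v k c : novikov f v -> D (fun x => k * v x) c = k * D v c.
Proof.
move=> nv; rewrite /D; have [s1 h1] := supp_D c nv.
rewrite -(fsumZ k h1); apply: eq_fsum => x; by rewrite mulrA.
Qed.

Lemma D_zero_above v c : (forall c0, v c0 != 0 -> Rle (f c0) (f c)) -> D v c = 0.
Proof.
move=> h; apply: fsum0 => c0.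
case: (v c0 =P 0) => [->|/eqP h1]; first by rewrite mul0r.
case: (m c c0 =P 0) => [->|/eqP h2]; first by rewrite mulr0.
have := h _ h1; have := Hm h2; lra.
Qed.

Lemma D_ext_above v w c : (forall c0, Rlt (f c) (f c0) -> v c0 = w c0) ->
  D v c = D w c.
Proof.
move=> h; apply: eq_fsum => c0.
case: (m c c0 =P 0) => [->|/eqP h2]; first by rewrite !mulr0.
by rewrite (h _ (Hm h2)).
Qed.

Lemma inCM_nov a b (v : C -> F) : inCM f a b v -> novikov f v.
Proof.
move=> hv b'; case: (Hfin b' b) => s hs; exists s => c h1 h2.
apply/hs; have := hv _ h1; lra.
Qed.

Definition maxf (s : seq C) (b : R) : R := foldr (fun c r => Rmax (f c) r) b s.

Lemma maxf_ge s b c : c \in s -> Rle (f c) (maxf s b).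
Proof.
elim: s => [|x s IH] //=; rewrite in_cons => /orP [/eqP ->|/IH h].
  exact: Rmax_l.
apply: Rle_trans h (Rmax_r _ _).
Qed.

Lemma maxf_geb s b : Rle b (maxf s b).
Proof.
elim: s => [|x s IH] /=; first exact: Rle_refl.
apply: Rle_trans IH (Rmax_r _ _).
Qed.

Lemma D_nz v c : D v c != 0 -> exists c0, v c0 * m c c0 != 0.
Proof.
move=> h; case: (classic (exists c0, v c0 * m c c0 != 0)) => // hn.
exfalso; move/eqP: h; apply; apply: fsum0 => c0.
by case: (v c0 * m c c0 =P 0) => // /eqP h; exfalso; apply: hn; exists c0.
Qed.

Lemma D_nov v : novikov f v -> novikov f (D v).
Proof.
move=> nv b; case: (nv b) => s hs; case: (Hfin b (maxf s b)) => U hU.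
exists U => c' /D_nz [c0 /nzM [h1 h2]] h3; apply/hU.
have h4 := Hm h2; have h5 := maxf_ge b (hs _ h1 ltac:(lra)); lra.
Qed.

Lemma DD v c : novikov f v -> D (D v) c = 0.
Proof.
move=> nv; case: (nv (f c)) => s hs; set B := maxf s (f c).
case: (Hfin (f c) B) => U hU.
have sU : forall c1, D v c1 * m c c1 != 0 -> c1 \in U.
  move=> c1 /nzM [/D_nz [c0 /nzM [h1 h2]] h3]; apply/hU.
  have h4 := Hm h2; have h5 := Hm h3.
  have h6 := maxf_ge (f c) (hs _ h1 ltac:(lra)); rewrite -/B in h6; lra.
rewrite /D (fsumE (s := U)); last exact: sU.
rewrite -/(D v).
transitivity (\sum_(c1 <- undup U) \sum_(c0 <- undup s) v c0 * m c1 c0 * m c c1).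
  apply: eq_bigr => c1 _; rewrite -mulr_suml.
  case: (m c c1 =P 0) => [->|/eqP h2]; first by rewrite !mulr0.
  congr (_ * _); rewrite /D (fsumE (s := s)) //.
  move=> c0 /nzM [h1 h3]; apply: hs h1 _; have := Hm h2; have := Hm h3; lra.
rewrite exchange_big /= big_seq; apply: big1 => c0; rewrite mem_undup => hc0.
under eq_bigr => c1 _ do rewrite -mulrA.
rewrite -mulr_sumr.
case: (v c0 =P 0) => [->|/eqP hv0]; first by rewrite mul0r.
have E : \sum_(c1 <- undup U) m c c1 * m c1 c0 = 0.
  rewrite -[RHS](Hmm c c0) (fsumE (s := U)) // => c1 /nzM [h2 h3].
  apply/hU; have := Hm h2; have := Hm h3.
  have := maxf_ge (f c) hc0; rewrite -/B; lra.
by rewrite (eq_bigr (fun i => m c i * m i c0)) ?E ?mulr0 // => i _; rewrite mulrC.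
Qed.

Lemma inCM_zero a b (v : C -> F) c : inCM f a b v -> ~ Rle a (f c) -> v c = 0.
Proof. move=> h n; case: (v c =P 0) => // /eqP /h [h1 _]; by []. Qed.

Lemma inCM_mono a b b' (v : C -> F) : inCM f a b v -> Rle b b' -> inCM f a b' v.
Proof. move=> h hb c /h [h1 h2]; split; lra. Qed.

Lemma dCM_above a b (v : C -> F) c : inCM f a b v -> Rlt b (f c) -> D v c = 0.
Proof.
move=> h hc; apply: D_zero_above => c0 /h [_ h1]; lra.
Qed.

Lemma dCM_eq_D a b (v : C -> F) c : inCM f a b v -> Rle a (f c) ->
  dCM f m a b v c = D v c.
Proof.
move=> h hc; rewrite /dCM; case: Rle_dec => // ha; case: Rle_dec => // hb.
by rewrite (dCM_above h) //; lra.
Qed.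

Lemma dCM_low a b (v : C -> F) c : ~ Rle a (f c) -> dCM f m a b v c = 0.
Proof. by move=> h; rewrite /dCM; case: Rle_dec. Qed.

Lemma dCM_high a b (v : C -> F) c : Rlt b (f c) -> dCM f m a b v c = 0.
Proof.
move=> h; rewrite /dCM; case: (Rle_dec a (f c)) => //= _.
by case: (Rle_dec (f c) b) => //= n; exfalso; lra.
Qed.

Lemma dCM_inCM a b (v : C -> F) : inCM f a b (dCM f m a b v).
Proof.
move=> c; rewrite /dCM; case: Rle_dec => h1; last by rewrite eqxx.
by case: Rle_dec => h2; last by rewrite eqxx.
Qed.

Lemma dCM_bound a b1 b2 (v : C -> F) c : inCM f a b1 v -> inCM f a b2 v ->
  dCM f m a b1 v c = dCM f m a b2 v c.
Proof.
move=> h1 h2; case: (Rle_dec a (f c)) => h.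
  by rewrite (dCM_eq_D h1 h) (dCM_eq_D h2 h).
by rewrite !dCM_low.
Qed.

Definition memDI (x : R * (R -> C -> F)) := cmem (DirInv f m) x.

Lemma DI_eqv (x y : R * (R -> C -> F)) :
  (forall a c, x.2 a c = y.2 a c) -> ceqv (DirInv f m) x y.
Proof.
move=> h; exists (Rmax x.1 y.1); split; first exact: Rmax_l.
split; first exact: Rmax_r. exact: h.
Qed.

Lemma DI_eqv' (x y : R * (R -> C -> F)) :
  ceqv (DirInv f m) x y -> forall a c, x.2 a c = y.2 a c.
Proof. by case=> b [_ [_ h]]. Qed.

Lemma coefDI x a c : memDI x ->
  x.2 a c = if Rle_dec a (f c) then x.2 (f c) c else 0.
Proof.
case=> h1 h2; case: (Rle_dec a (f c)) => h /=.
  rewrite (h2 a (f c) h c) /Defs.pmap; case: (Rle_dec (f c) (f c)) => //= n.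
  exfalso; lra.
exact: inCM_zero (h1 a) h.
Qed.

Lemma DI_cc : chain_complex (DirInv f m).
Proof.
split; first by move=> x _; apply: DI_eqv.
split; first by move=> x y /DI_eqv' h; apply: DI_eqv => a c; rewrite h.
split; first by move=> x y z /DI_eqv' h1 /DI_eqv' h2; apply: DI_eqv => a c; rewrite h1 h2.
split.
  split; first by move=> a c /=; rewrite eqxx.
  by move=> a1 a2 _ c /=; rewrite /Defs.pmap; case: Rle_dec.
split.
  move=> x y [hx1 hx2] [hy1 hy2]; split => /=.
    move=> a c h.
    case: (x.2 a c =P 0) => [e|/eqP /hx1 [h1 h2]].
      rewrite e add0r in h; have [h1 h2] := hy1 _ _ h.
      split; first by []. apply: Rle_trans h2 (Rmax_r _ _).
    split; first by []. apply: Rle_trans h2 (Rmax_l _ _).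
  move=> a1 a2 h c; rewrite (hx2 _ _ h) (hy2 _ _ h) /Defs.pmap.
  by case: (Rle_dec a2 (f c)) => _ /=; rewrite ?addr0.
split.
  move=> k x [hx1 hx2]; split => /=.
    by move=> a c /nzM [_ /hx1].
  move=> a1 a2 h c; rewrite (hx2 _ _ h) /Defs.pmap.
  by case: (Rle_dec a2 (f c)) => _ /=; rewrite ?mulr0.
split.
  move=> x [hx1 hx2]; split => /=; first by move=> a; apply: dCM_inCM.
  move=> a1 a2 h c; rewrite /Defs.pmap; case: (Rle_dec a2 (f c)) => h'; last exact: dCM_low.
  rewrite (dCM_eq_D (hx1 a2) h') (dCM_eq_D (hx1 a1)); last lra.
  apply: D_ext_above => c0 hc0; rewrite (hx2 _ _ h) /Defs.pmap.
  by case: (Rle_dec a2 (f c0)) => // n; exfalso; lra.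
split.
  move=> x x' y y' _ _ _ _ /DI_eqv' h1 /DI_eqv' h2; apply: DI_eqv => a c /=.
  by rewrite h1 h2.
split.
  move=> k x x' _ _ /DI_eqv' h1; apply: DI_eqv => a c /=; by rewrite h1.
split.
  move=> x x' [hx1 _] [hx'1 _] /DI_eqv' h1; apply: DI_eqv => a c /=.
  have e : x.2 a = x'.2 a by apply: functional_extensionality => c0; apply: h1.
  rewrite e; apply: dCM_bound => //; by rewrite -e.
split.
  move=> x y [hx1 _] [hy1 _]; apply: DI_eqv => a c /=.
  have hx := inCM_mono (hx1 a) (Rmax_l x.1 y.1).
  have hy := inCM_mono (hy1 a) (Rmax_r x.1 y.1).
  rewrite (dCM_bound c (hx1 a) hx) (dCM_bound c (hy1 a) hy).
  case: (Rle_dec a (f c)) => h; last by rewrite !dCM_low ?addr0.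
  have hxy : inCM f a (Rmax x.1 y.1) (fun c0 => x.2 a c0 + y.2 a c0).
    move=> c0 h0; case: (x.2 a c0 =P 0) => [e|/eqP /hx //].
    by rewrite e add0r in h0; apply: hy.
  rewrite !dCM_eq_D //; apply: D_add; exact: inCM_nov.
split.
  move=> k x [hx1 _]; apply: DI_eqv => a c /=.
  case: (Rle_dec a (f c)) => h; last by rewrite !dCM_low ?mulr0.
  have hk : inCM f a x.1 (fun c0 => k * x.2 a c0) by move=> c0 /nzM [_ /hx1].
  rewrite !dCM_eq_D //; apply: D_scl; exact: inCM_nov.
move=> x [hx1 _]; apply: DI_eqv => a c /=.
case: (Rle_dec a (f c)) => h; last by rewrite !dCM_low.
rewrite dCM_eq_D //; last exact: dCM_inCM.
rewrite -(DD c (inCM_nov (hx1 a))); apply: D_ext_above => c0 hc0.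
case: (Rle_dec (f c0) x.1) => h'.
  by rewrite dCM_eq_D //; lra.
rewrite dCM_high; last lra.
rewrite (dCM_above (hx1 a)) //; lra.
Qed.


Definition memID (z : R -> R * (C -> F)) := cmem (InvDir f m) z.

Lemma ED_eqv (p q : R * (C -> F)) : (forall c, p.2 c = q.2 c) -> eqvDir p q.
Proof.
move=> h; exists (Rmax p.1 q.1); split; first exact: Rmax_l.
split; first exact: Rmax_r. exact: h.
Qed.

Lemma ED_eqv' (p q : R * (C -> F)) : eqvDir p q -> forall c, p.2 c = q.2 c.
Proof. by case=> b [_ [_ h]]. Qed.

Lemma ID_eqv (z w : R -> R * (C -> F)) :
  (forall a c, (z a).2 c = (w a).2 c) -> ceqv (InvDir f m) z w.
Proof. by move=> h a; apply: ED_eqv. Qed.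

Lemma ID_eqv' (z w : R -> R * (C -> F)) :
  ceqv (InvDir f m) z w -> forall a c, (z a).2 c = (w a).2 c.
Proof. by move=> h a; apply: ED_eqv'. Qed.

Lemma ID_comp z a1 a2 c : memID z -> Rle a1 a2 ->
  (z a2).2 c = if Rle_dec a2 (f c) then (z a1).2 c else 0.
Proof. by case=> _ h2 h; rewrite (ED_eqv' (h2 _ _ h)). Qed.

Lemma coefID z a c : memID z ->
  (z a).2 c = if Rle_dec a (f c) then (z (f c)).2 c else 0.
Proof.
move=> hz; case: (Rle_dec a (f c)) => h /=.
  rewrite (ID_comp c hz h); case: (Rle_dec (f c) (f c)) => //= n; exfalso; lra.
by case: hz => h1 _; exact: inCM_zero (h1 a) h.
Qed.

Lemma ID_cc : chain_complex (InvDir f m).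
Proof.
split; first by move=> x _; apply: ID_eqv.
split; first by move=> x y /ID_eqv' h; apply: ID_eqv => a c; rewrite h.
split; first by move=> x y z /ID_eqv' h1 /ID_eqv' h2; apply: ID_eqv => a c; rewrite h1 h2.
split.
  split; first by move=> a c /=; rewrite eqxx.
  move=> a1 a2 _; apply: ED_eqv => c /=; rewrite /Defs.pmap.
  by case: (Rle_dec a2 (f c)).
split.
  move=> x y hx hy; split => /=.
    case: hx hy => hx1 _ [hy1 _] a c h.
    case: ((x a).2 c =P 0) => [e|/eqP /hx1 [h1 h2]].
      rewrite e add0r in h; have [h1 h2] := hy1 _ _ h.
      split; first by []. apply: Rle_trans h2 (Rmax_r _ _).
    split; first by []. apply: Rle_trans h2 (Rmax_l _ _).
  move=> a1 a2 h; apply: ED_eqv => c /=.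
  rewrite (ID_comp c hx h) (ID_comp c hy h) /Defs.pmap.
  by case: (Rle_dec a2 (f c)) => _ /=; rewrite ?addr0.
split.
  move=> k x hx; split => /=.
    by case: hx => hx1 _ a c /nzM [_ /hx1].
  move=> a1 a2 h; apply: ED_eqv => c /=.
  rewrite (ID_comp c hx h) /Defs.pmap.
  by case: (Rle_dec a2 (f c)) => _ /=; rewrite ?mulr0.
split.
  move=> x hx; split => /=; first by move=> a; apply: dCM_inCM.
  move=> a1 a2 h; apply: ED_eqv => c /=.
  have hx1 := hx.1.
  rewrite /Defs.pmap; case: (Rle_dec a2 (f c)) => h' /=; last exact: dCM_low.
  rewrite (dCM_eq_D (hx1 a2) h') (dCM_eq_D (hx1 a1)); last lra.
  apply: D_ext_above => c0 hc0; rewrite (ID_comp c0 hx h).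
  by case: (Rle_dec a2 (f c0)) => //= n; exfalso; lra.
split.
  move=> x x' y y' _ _ _ _ /ID_eqv' h1 /ID_eqv' h2; apply: ID_eqv => a c /=.
  by rewrite h1 h2.
split.
  move=> k x x' _ _ /ID_eqv' h1; apply: ID_eqv => a c /=; by rewrite h1.
split.
  move=> x x' [hx1 _] [hx'1 _] /ID_eqv' h1; apply: ID_eqv => a c /=.
  have e : (x a).2 = (x' a).2 by apply: functional_extensionality => c0; apply: h1.
  rewrite e; apply: dCM_bound => //; by rewrite -e.
split.
  move=> x y [hx1 _] [hy1 _]; apply: ID_eqv => a c /=.
  have hx := inCM_mono (hx1 a) (Rmax_l (x a).1 (y a).1).
  have hy := inCM_mono (hy1 a) (Rmax_r (x a).1 (y a).1).
  rewrite (dCM_bound c (hx1 a) hx) (dCM_bound c (hy1 a) hy).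
  case: (Rle_dec a (f c)) => h; last by rewrite !dCM_low ?addr0.
  have hxy : inCM f a (Rmax (x a).1 (y a).1) (fun c0 => (x a).2 c0 + (y a).2 c0).
    move=> c0 h0; case: ((x a).2 c0 =P 0) => [e|/eqP /hx //].
    by rewrite e add0r in h0; apply: hy.
  rewrite !dCM_eq_D //; apply: D_add; exact: inCM_nov.
split.
  move=> k x [hx1 _]; apply: ID_eqv => a c /=.
  case: (Rle_dec a (f c)) => h; last by rewrite !dCM_low ?mulr0.
  have hk : inCM f a (x a).1 (fun c0 => k * (x a).2 c0) by move=> c0 /nzM [_ /hx1].
  rewrite !dCM_eq_D //; apply: D_scl; exact: inCM_nov.
move=> x [hx1 _]; apply: ID_eqv => a c /=.
case: (Rle_dec a (f c)) => h; last by rewrite !dCM_low.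
rewrite dCM_eq_D //; last exact: dCM_inCM.
rewrite -(DD c (inCM_nov (hx1 a))); apply: D_ext_above => c0 hc0.
case: (Rle_dec (f c0) (x a).1) => h'.
  by rewrite dCM_eq_D //; lra.
rewrite dCM_high; last lra.
rewrite (dCM_above (hx1 a)) //; lra.
Qed.

Lemma Nov_cc : chain_complex (Novikov f m).
Proof.
split; first by [].
split; first by move=> x y h c; rewrite h.
split; first by move=> x y z h1 h2 c; rewrite h1 h2.
split; first by move=> b; exists [::] => c; rewrite eqxx.
split.
  move=> x y hx hy b; case: (hx b) => s1 h1; case: (hy b) => s2 h2.
  exists (s1 ++ s2) => c /= h hb; rewrite mem_cat.
  case: (x c =P 0) => [e|/eqP /h1 -> //]; rewrite e add0r in h.
  by rewrite (h2 _ h hb) orbT.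
split.
  move=> k x hx b; case: (hx b) => s1 h1; exists s1 => c /nzM [_ h]; exact: h1.
split; first by move=> x hx; apply: D_nov.
split; first by move=> x x' y y' _ _ _ _ h1 h2 c /=; rewrite h1 h2.
split; first by move=> k x x' _ _ h1 c /=; rewrite h1.
split.
  move=> x x' _ _ h1 c /=; apply: eq_fsum => c0; by rewrite h1.
split; first by move=> x y hx hy c; apply: D_add.
split; first by move=> k x hx c; apply: D_scl.
by move=> x hx c; apply: DD.
Qed.


Lemma DN_iso : chain_iso (@DirInv_to_Nov F C f m).
Proof.
rewrite /DirInv_to_Nov.
split.
  move=> x [hx1 _] b; case: (Hfin b x.1) => s hs; exists s => c h hb.
  apply/hs; have [_ h2] := hx1 _ _ h; split; lra.
split; first by move=> x x' _ _ /DI_eqv' h c /=; rewrite h.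
split; first by [].
split; first by [].
split.
  move=> x hx c /=; have hx1 := hx.1.
  rewrite dCM_eq_D //; last exact: Rle_refl.
  apply: D_ext_above => c0 hc0; rewrite (coefDI (f c) c0 hx).
  by case: (Rle_dec (f c) (f c0)) => //= n; exfalso; lra.
split.
  move=> x x' hx hx' h; apply: DI_eqv => a c.
  by rewrite (coefDI a c hx) (coefDI a c hx') h.
move=> g hg; case: (hg R0) => s hs; set B := maxf s R0.
exists (B, fun a c => if Rle_dec a (f c) then g c else 0).
split; last first.
  by move=> c /=; case: (Rle_dec (f c) (f c)) => //= n; exfalso; lra.
split => /=.
  move=> a c; case: (Rle_dec a (f c)) => /= h; last by rewrite eqxx.
  move=> hgc; split => //; case: (Rle_dec (f c) R0) => h0.
    have := maxf_geb s R0; rewrite -/B; lra.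
  have := maxf_ge R0 (hs _ hgc ltac:(lra)); rewrite -/B; lra.
move=> a1 a2 h c; rewrite /Defs.pmap.
case: (Rle_dec a2 (f c)) => h2 /=.
  by case: (Rle_dec a1 (f c)) => //= n; exfalso; lra.
by case: (Rle_dec a2 (f c)).
Qed.

Lemma kmap_mem x : memDI x -> memID (@kmap F C f m x).
Proof.
case=> hx1 hx2; split => //= a1 a2 h; apply: ED_eqv => c /=; exact: hx2.
Qed.

Lemma ID_bound z a c : memID z -> (z a).2 c != 0 ->
  Rle a (f c) /\ Rle (f c) (Rmax (z R0).1 R0).
Proof.
move=> hz h; have hz1 := hz.1; have [h1 h2] := hz1 _ _ h; split => //.
case: (Rle_dec (f c) R0) => h0; first by have := Rmax_r (z R0).1 R0; lra.
have e1 := coefID a c hz; have e0 := coefID R0 c hz.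
move: e1 e0; case: (Rle_dec a (f c)) => //= _ e1.
case: (Rle_dec R0 (f c)) => //= h0' e0; last by exfalso; lra.
rewrite e1 -e0 in h; have [_ h3] := hz1 _ _ h.
have := Rmax_l (z R0).1 R0; lra.
Qed.

Lemma kmap_iso : chain_iso (@kmap F C f m).
Proof.
split; first exact: kmap_mem.
split; first by move=> x x' _ _ /DI_eqv' h; apply: ID_eqv => a c /=.
split; first by move=> x y _ _; apply: ID_eqv.
split; first by move=> k x _; apply: ID_eqv.
split; first by move=> x _; apply: ID_eqv.
split; first by move=> x x' _ _ /ID_eqv' h; apply: DI_eqv.
move=> z hz; exists (Rmax (z R0).1 R0, fun a => (z a).2); split; last first.
  by apply: ID_eqv.
split => /=.
  by move=> a c h; apply: ID_bound.
move=> a1 a2 h c; exact: ED_eqv' (hz.2 _ _ h) c.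
Qed.

Lemma IN_iso : chain_iso (@InvDir_to_Nov F C f m).
Proof.
rewrite /InvDir_to_Nov.
split.
  move=> z hz b; case: (Hfin b (Rmax (z R0).1 R0)) => s hs; exists s => c h hb.
  apply/hs; have [_ h2] := ID_bound hz h; split; lra.
split; first by move=> x x' _ _ /ID_eqv' h c /=; rewrite h.
split; first by [].
split; first by [].
split.
  move=> z hz c /=; have hz1 := hz.1.
  rewrite dCM_eq_D //; last exact: Rle_refl.
  apply: D_ext_above => c0 hc0; rewrite (coefID (f c) c0 hz).
  by case: (Rle_dec (f c) (f c0)) => //= n; exfalso; lra.
split.
  move=> x x' hx hx' h; apply: ID_eqv => a c.
  by rewrite (coefID a c hx) (coefID a c hx') h.
move=> g hg; have [_ [_ [_ [_ [_ [_ hs]]]]]] := DN_iso.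
have [x [hx e]] := hs g hg.
by exists (kmap x); split; [exact: kmap_mem|].
Qed.

End Floer.

Lemma hom_of_iso (F : fieldType) (X Y : cx F) (phi : ccar X -> ccar Y) :
  chain_complex X -> chain_complex Y -> chain_iso phi ->
  ceqv Y (phi (czero X)) (czero Y) ->
  (forall y, cmem Y y -> ceqv Y (cadd Y y (cscl Y (-1) y)) (czero Y)) ->
  ceqv Y (cdif Y (czero Y)) (czero Y) ->
  homology_iso phi.
Proof.
move=> [rX [sX [tX [m0X [maX [msX [mdX [raX [rsX [rdX [daX [dsX ddX]]]]]]]]]]]].
move=> [rY [sY [tY [m0Y [maY [msY [mdY [raY [rsY [rdY [daY [dsY ddY]]]]]]]]]]]].
move=> [pm [pr [pa [ps [pd [pi psu]]]]]] E0 Einv Ed0.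
have TR : forall x z y, ceqv Y y z -> ceqv Y x y -> ceqv Y x z.
  by move=> x z y h1 h2; exact: (tY x y z h2 h1).
have TL : forall x z y, ceqv Y x y -> ceqv Y y z -> ceqv Y x z.
  by move=> x z y h1 h2; exact: (tY x y z h1 h2).
have SY : forall x y, ceqv Y x y -> ceqv Y y x by move=> x y; exact: sY.
have Hhom : forall v w, cmem Y v -> cmem Y w -> ceqv Y v w -> homologous v w.
  move=> v w hv hw e; exists (czero Y); split => //.
  apply: (TR _ _ _ (SY _ _ Ed0)); apply: (TR _ _ _ (Einv _ hv)).
  apply: raY => //; [exact: msY | exact: msY | exact: rY |].
  by apply: rsY => //; apply: SY.
have Hcyc : forall x, Defs.cycle x -> Defs.cycle (phi x).
  move=> x [hx hdx]; split; first exact: pm.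
  apply: (TL _ _ _ (SY _ _ (pd _ hx))); apply: (TR _ _ _ E0).
  by apply: pr => //; apply: mdX.
have Hlin : forall x x', cmem X x -> cmem X x' ->
    ceqv Y (phi (cadd X x (cscl X (-1) x'))) (cadd Y (phi x) (cscl Y (-1) (phi x'))).
  move=> x x' hx hx'.
  apply: (TL _ _ _ (pa _ _ hx (msX _ _ hx'))).
  apply: raY; try exact: pm; try (by apply: msY; apply: pm); try (by apply: pm; apply: msX).
    exact: rY (pm _ hx).
  exact: ps.
split; first exact: Hcyc.
split.
  move=> x x' [hx _] [hx' _] [z [hz e]]; exists (phi z); split; first exact: pm.
  have hmx : cmem X (cadd X x (cscl X (-1) x')) by apply: maX => //; apply: msX.
  apply: (TR _ _ _ (pd _ hz)); apply: (TR _ _ _ (pr _ _ hmx (mdX _ hz) e)).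
  by apply: SY; apply: Hlin.
split.
  move=> x y [hx _] [hy _]; apply: Hhom; first by apply: pm; apply: maX.
    by apply: maY; apply: pm.
  exact: pa.
split.
  move=> k x [hx _]; apply: Hhom; first by apply: pm; apply: msX.
    by apply: msY; apply: pm.
  exact: ps.
split.
  move=> x x' [hx _] [hx' _] [w [hw e]].
  have [z [hz ez]] := psu _ hw.
  exists z; split => //.
  have hmx : cmem X (cadd X x (cscl X (-1) x')) by apply: maX => //; apply: msX.
  apply: pi => //; first exact: mdX.
  apply: (TR _ _ _ (SY _ _ (pd _ hz))).
  apply: (TR _ _ _ (rdY _ _ hw (pm _ hz) (SY _ _ ez))).
  apply: (TR _ _ _ e); exact: Hlin.
move=> y [hy hdy]; have [x [hx e]] := psu _ hy.
have hcx : Defs.cycle x.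
  split => //; apply: pi => //; first exact: mdX.
  apply: (TL _ _ _ (pd _ hx)); apply: (TL _ _ _ (rdY _ _ (pm _ hx) hy e)).
  by apply: (TL _ _ _ hdy); apply: SY.
exists x; split => //; apply: Hhom => //; exact: pm.
Qed.

Theorem mainTheorem7 (F : fieldType) (C : eqType) (f : C -> R)
    (m : C -> C -> F) :
  floer_triple f m ->
  (* the three objects are chain complexes *)
  chain_complex (DirInv f m) /\
  chain_complex (InvDir f m) /\
  chain_complex (Novikov f m) /\
  (* both limit complexes are canonically isomorphic to the Novikov complex *)
  chain_iso (@DirInv_to_Nov F C f m) /\
  chain_iso (@InvDir_to_Nov F C f m) /\
  (* compatibility of these isomorphisms with k *)
  (forall x, cmem (DirInv f m) x ->
     ceqv (Novikov f m) (@InvDir_to_Nov F C f m (@kmap F C f m x))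
                        (@DirInv_to_Nov F C f m x)) /\
  (* k is an isomorphism of chain complexes, hence so is Hk *)
  chain_iso (@kmap F C f m) /\
  homology_iso (@kmap F C f m) /\
  (* H(lim_b lim_a CM) = HM and H(lim_a lim_b CM) = HM *)
  homology_iso (@DirInv_to_Nov F C f m) /\
  homology_iso (@InvDir_to_Nov F C f m).
Proof.
move=> [Hfin [Hm Hmm]].
have cDI : chain_complex (DirInv f m) by apply: DI_cc.
have cID : chain_complex (InvDir f m) by apply: ID_cc.
have cN : chain_complex (Novikov f m) by apply: Nov_cc.
have iDN : chain_iso (@DirInv_to_Nov F C f m) by apply: DN_iso.
have iIN : chain_iso (@InvDir_to_Nov F C f m) by apply: IN_iso.
have ik : chain_iso (@kmap F C f m) by apply: kmap_iso.
have Ninv : forall y, cmem (Novikov f m) y ->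
    ceqv (Novikov f m) (cadd (Novikov f m) y (cscl (Novikov f m) (-1) y)) (czero (Novikov f m)).
  by move=> y _ c /=; rewrite mulN1r addrN.
have Nd0 : ceqv (Novikov f m) (cdif (Novikov f m) (czero (Novikov f m))) (czero (Novikov f m)).
  by move=> c /=; apply: fsum0 => c0; rewrite mul0r.
do 7 (split => //).
split.
  apply: (@hom_of_iso F (DirInv f m) (InvDir f m)) => //; first by apply: ID_eqv.
    by move=> y _; apply: ID_eqv => a c /=; rewrite mulN1r addrN.
  apply: ID_eqv => a c /=; rewrite /dCM.
  case: (Rle_dec a (f c)) => //= _; case: (Rle_dec (f c) R0) => //= _.
  by apply: fsum0 => c0; rewrite mul0r.
split.
  by apply: (@hom_of_iso F (DirInv f m) (Novikov f m)).
by apply: (@hom_of_iso F (InvDir f m) (Novikov f m)).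
Qed.
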